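(* Let $G$ be a finite graph obtained by the following growth process. Start from a complete graph $K_{n_0}$ with $n_0\ge 2$ (the initial simplex). At each step, choose an integer $n\ge 2$, choose one of the previously added simplexes $\sigma$ (each simplex being the vertex set of a complete subgraph added at an earlier step, or the initial one), and choose a nonempty subset $S\subseteq\sigma$ with $1\le |S|\le n-1$ (a face of $\sigma$). Then add $n-|S|$ new vertices to the graph, and add edges so that $S$ together with the new vertices induces a complete graph $K_n$; this $K_n$ is recorded as a newly added simplex. No other edges are added. Then $G$ is connected and $\delta(G)\le 1$, i.e. for every four vertices $A,B,C,D$ of $G$ labelled so that $d(A,B)+d(C,D)\le d(A,C)+d(B,D)\le d(A,D)+d(B,C)$ one has $$\frac{\big(d(A,D)+d(B,C)\big)-\big(d(A,C)+d(B,D)\big)}{2}\le 1 .$$ In particular this holds regardless of whether some edges of the attached simplexes are marked as ''defect'' edges (the marking only changes which faces may be chosen, not the resulting graph).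
   Context: $d(U,V)$ denotes the shortest-path (graph) distance between vertices $U,V$ of $G$. The (Gromov four-point) hyperbolicity parameter $\delta(G)$ of a connected graph $G$ is the maximum, over all quadruples of vertices $A,B,C,D$, of $(\mathcal L-\mathcal M)/2$, where $\mathcal L$ is the largest and $\mathcal M$ the middle of the three sums $d(A,B)+d(C,D)$, $d(A,C)+d(B,D)$, $d(A,D)+d(B,C)$. A simplex of order $q_{max}=n-1$ is a complete graph on $n$ vertices; a face of order $q$ of a simplex is a complete subgraph on $q+1$ of its vertices. *)

(* Defs.v *)
From Stdlib Require Import Arith List Lia.
Import ListNotations.

(* A graph: number of vertices N (vertices are 0..N-1) and an edge relation. *)
Definition graph_rel := nat -> nat -> Prop.

Definition clique_rel (s : list nat) : graph_rel :=
  fun u v => In u s /\ In v s /\ u <> v.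

(* [grown N E Ss] : the graph with vertices 0..N-1 and edge relation E is
   obtained by the growth process, and Ss is the list of all simplexes
   (vertex sets of the added complete subgraphs) added so far, including
   the initial one. *)
Inductive grown : nat -> graph_rel -> list (list nat) -> Prop :=
| grown_init (n0 : nat) :
    2 <= n0 ->
    grown n0 (clique_rel (seq 0 n0)) [seq 0 n0]
| grown_step (N : nat) (E : graph_rel) (Ss : list (list nat))
    (sigma S : list nat) (n : nat) :
    grown N E Ss ->
    2 <= n ->
    In sigma Ss ->
    incl S sigma -> NoDup S ->
    1 <= length S -> length S <= n - 1 ->
    grown (N + (n - length S))
          (fun u v => E u v \/ clique_rel (S ++ seq N (n - length S)) u v)
          ((S ++ seq N (n - length S)) :: Ss).

Inductive walk (E : graph_rel) : nat -> nat -> nat -> Prop :=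
| walk0 (u : nat) : walk E u u 0
| walkS (u w v k : nat) : E u w -> walk E w v k -> walk E u v (S k).

Definition is_dist (E : graph_rel) (u v d : nat) : Prop :=
  walk E u v d /\ forall m, walk E u v m -> d <= m.

(* Main.v *)
Require Import Defs.
From Stdlib Require Import Arith List Lia Classical.
Import ListNotations.

Lemma walk_app E u w v k1 k2 : walk E u w k1 -> walk E w v k2 -> walk E u v (k1 + k2).
Proof. induction 1; intros; simpl; [assumption| econstructor; eauto]. Qed.

Lemma walk_edge (E : graph_rel) u v : E u v -> walk E u v 1.
Proof. intros; econstructor; [eassumption| constructor]. Qed.

Lemma walk_rev (E : graph_rel) u v k : (forall a b, E a b -> E b a) -> walk E u v k -> walk E v u k.
Proof.
  intros Hs H; induction H. constructor.
  replace (S k) with (k + 1) by lia. eapply walk_app; eauto. apply walk_edge; auto.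
Qed.

Lemma walk_mono (E F : graph_rel) u v k : (forall a b, E a b -> F a b) -> walk E u v k -> walk F u v k.
Proof. intros HF H; induction H; econstructor; eauto. Qed.

Lemma min_ex (P : nat -> Prop) : (exists n, P n) -> exists n, P n /\ forall m, P m -> n <= m.
Proof.
  intros [n Hn]. revert Hn. induction n as [n IH] using lt_wf_ind. intros Hn.
  destruct (classic (exists m, m < n /\ P m)) as [[m [Hm Pm]]|H].
  - eapply IH; eauto.
  - exists n; split; auto. intros m Pm. destruct (le_lt_dec n m); auto.
    exfalso; apply H; eauto.
Qed.

Definition isD (E : graph_rel) (A B : list nat) (d : nat) : Prop :=
  (exists a b, In a A /\ In b B /\ walk E a b d) /\
  (forall a b m, In a A -> In b B -> walk E a b m -> d <= m).

Lemma isD_unique E A B d1 d2 : isD E A B d1 -> isD E A B d2 -> d1 = d2.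
Proof.
  intros [[a [b [Ha [Hb Hw]]]] H1] [[a' [b' [Ha' [Hb' Hw']]]] H2].
  specialize (H1 _ _ _ Ha' Hb' Hw'). specialize (H2 _ _ _ Ha Hb Hw). lia.
Qed.

Lemma isD_sym E A B d : (forall a b, E a b -> E b a) -> isD E A B d -> isD E B A d.
Proof.
  intros Hs [[a [b [Ha [Hb Hw]]]] H]. split.
  - exists b, a; repeat split; auto. apply walk_rev; auto.
  - intros x y m Hx Hy Hw'. apply (H y x m); auto. apply walk_rev; auto.
Qed.

Lemma isD_exists E A B : (exists a b k, In a A /\ In b B /\ walk E a b k) -> exists d, isD E A B d.
Proof.
  intros H.
  destruct (min_ex (fun d => exists a b, In a A /\ In b B /\ walk E a b d)) as [d [Hd Hm]].
  { destruct H as [a [b [k Hk]]]; eauto. }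
  exists d; split; auto. intros a b m Ha Hb Hw; apply Hm; eauto.
Qed.

Lemma isD_zero E A B c : In c A -> In c B -> isD E A B 0.
Proof.
  intros; split. exists c, c; repeat split; auto; constructor. intros; lia.
Qed.

Lemma isD_one (F : graph_rel) A B : A <> [] -> B <> [] ->
  (forall a b, In a A -> In b B -> a <> b -> F a b) ->
  (forall a, In a A -> ~ In a B) -> isD F A B 1.
Proof.
  intros HA HB HF Hd. split.
  - destruct A as [|a A]; [congruence|]. destruct B as [|b B]; [congruence|].
    exists a, b. assert (a <> b) by (intro; subst; apply (Hd b); simpl; auto).
    repeat split; simpl; auto. apply walk_edge; apply HF; simpl; auto.
  - intros a b m Ha Hb Hw. destruct m; [|lia]. inversion Hw; subst. exfalso; eapply Hd; eauto.
Qed.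

Definition cliq (N : nat) (E : graph_rel) (K : list nat) : Prop :=
  K <> [] /\ (forall u, In u K -> u < N) /\ (forall u v, In u K -> In v K -> u <> v -> E u v).

Lemma wtri N E A B C x y z : cliq N E B -> isD E A B x -> isD E B C y -> isD E A C z -> z <= x + y + 1.
Proof.
  intros [_ [_ HB]] [[a [b [Ha [Hb Hw1]]]] _] [[b' [c [Hb' [Hc Hw2]]]] _] [_ H].
  destruct (Nat.eq_dec b b').
  - subst. specialize (H a c (x + y) Ha Hc (walk_app _ _ _ _ _ _ Hw1 Hw2)). lia.
  - assert (walk E a c (x + (1 + y))).
    { eapply walk_app; eauto. eapply walk_app; eauto. apply walk_edge; auto. }
    specialize (H _ _ _ Ha Hc H0). lia.
Qed.

Definition FP (s1 s2 s3 : nat) :=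
  (s1 <= s2 + 2 \/ s1 <= s3 + 2) /\ (s2 <= s1 + 2 \/ s2 <= s3 + 2) /\ (s3 <= s1 + 2 \/ s3 <= s2 + 2).

Definition TRI (d12 d13 d14 d23 d24 d34 : nat) :=
  d13 <= d12 + d23 + 1 /\ d13 <= d14 + d34 + 1 /\
  d12 <= d13 + d23 + 1 /\ d12 <= d14 + d24 + 1 /\
  d14 <= d12 + d24 + 1 /\ d14 <= d13 + d34 + 1 /\
  d23 <= d12 + d13 + 1 /\ d23 <= d24 + d34 + 1 /\
  d24 <= d12 + d14 + 1 /\ d24 <= d23 + d34 + 1 /\
  d34 <= d13 + d14 + 1 /\ d34 <= d23 + d24 + 1.

Lemma arithZT d12 d13 d14 d23 d24 d34 : TRI d12 d13 d14 d23 d24 d34 ->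
  (d12 = 0 \/ d13 = 0 \/ d14 = 0 \/ d23 = 0 \/ d24 = 0 \/ d34 = 0 \/
   (d12 <= 1 /\ d13 = d23 /\ d14 = d24) \/
   (d13 <= 1 /\ d12 = d23 /\ d14 = d34) \/
   (d14 <= 1 /\ d12 = d24 /\ d13 = d34) \/
   (d23 <= 1 /\ d12 = d13 /\ d24 = d34) \/
   (d24 <= 1 /\ d12 = d14 /\ d23 = d34) \/
   (d34 <= 1 /\ d13 = d14 /\ d23 = d24)) ->
  FP (d12 + d34) (d13 + d24) (d14 + d23).
Proof. unfold TRI, FP; intros; lia. Qed.

Lemma arithA b12 b13 b14 b23 b24 b34 t1 t2 t3 t4 :
  FP (b12 + b34) (b13 + b24) (b14 + b23) ->
  FP ((b12 + t1 + t2) + (b34 + t3 + t4)) ((b13 + t1 + t3) + (b24 + t2 + t4)) ((b14 + t1 + t4) + (b23 + t2 + t3)).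
Proof. unfold FP; intros; lia. Qed.
Definition ext (E : graph_rel) (S : list nat) (N m : nat) : graph_rel :=
  fun u v => E u v \/ clique_rel (S ++ seq N m) u v.

Definition SH (N : nat) (E : graph_rel) (S : list nat) (m : nat) :=
  (forall u v, E u v -> u < N /\ v < N) /\ (forall u v, E u v -> E v u) /\
  (forall u v, In u S -> In v S -> u <> v -> E u v) /\ (forall u, In u S -> u < N) /\
  S <> [] /\ 1 <= m.

Lemma inQ S N m u : In u (S ++ seq N m) <-> In u S \/ (N <= u /\ u < N + m).
Proof. rewrite in_app_iff, in_seq. tauto. Qed.

Lemma ext_sym E S N m : (forall u v, E u v -> E v u) -> forall u v, ext E S N m u v -> ext E S N m v u.
Proof. unfold ext, clique_rel; intros Hs u v [H|[? [? ?]]]; [left; auto| right; auto]. Qed.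

Lemma ext_Q E S N m a b : In a (S ++ seq N m) -> In b (S ++ seq N m) -> a <> b -> ext E S N m a b.
Proof. unfold ext, clique_rel; auto. Qed.

Lemma ext_old N E S m u v : SH N E S m -> u < N -> v < N -> ext E S N m u v -> E u v.
Proof.
  intros (HE & Hs & HS & HSl & _) Hu Hv [H|(H1 & H2 & H3)]; auto.
  apply inQ in H1; apply inQ in H2. apply HS; auto; [destruct H1|destruct H2]; auto; lia.
Qed.

Lemma proj N E S m : SH N E S m -> forall u v k, walk (ext E S N m) u v k -> v < N ->
  (u < N -> exists k', k' <= k /\ walk E u v k') /\
  (N <= u -> exists s k', In s S /\ k' + 1 <= k /\ walk E s v k').
Proof.
  intros HH. pose proof HH as (HE & Hs & HS & HSl & _).
  induction 1 as [u|u w v k Huw Hw IH]; intros Hv.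
  - split; intros; [exists 0; split; [lia|constructor]| lia].
  - specialize (IH Hv) as [IH1 IH2]. destruct Huw as [Huw|(Hu & Hw' & Hne)].
    + destruct (HE _ _ Huw). split; intros.
      * destruct (IH1 H0) as [k' [? ?]]. exists (1 + k'); split; [lia|econstructor; eauto].
      * lia.
    + apply inQ in Hu; apply inQ in Hw'. split; intros Hu'.
      * assert (In u S) by (destruct Hu; auto; lia).
        destruct (lt_dec w N).
        -- assert (In w S) by (destruct Hw'; auto; lia).
           destruct (IH1 l) as [k' [? ?]]. exists (1 + k'); split; [lia|econstructor; eauto].
        -- destruct (IH2 ltac:(lia)) as [s [k' (Hs' & Hk & Hw2)]].
           destruct (Nat.eq_dec u s).
           ++ subst; exists k'; split; [lia|auto].
           ++ exists (1 + k'); split; [lia|econstructor; eauto].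
      * destruct (lt_dec w N).
        -- assert (In w S) by (destruct Hw'; auto; lia).
           destruct (IH1 l) as [k' [? ?]]. exists w, k'; repeat split; auto; lia.
        -- destruct (IH2 ltac:(lia)) as [s [k' (Hs' & Hk & Hw2)]].
           exists s, k'; repeat split; auto; lia.
Qed.

Inductive red (N : nat) (S : list nat) : list nat -> list nat -> nat -> Prop :=
| redO K : (forall u, In u K -> u < N) -> red N S K K 0
| redM K : (forall u, In u K -> In u S \/ N <= u) -> (exists u, In u K /\ u < N) ->
           (exists u, In u K /\ N <= u) -> red N S K (filter (fun v => v <? N) K) 0
| redX K : (forall u, In u K -> N <= u) -> red N S K S 1.

Lemma red_exists N E S m K : SH N E S m -> cliq (N + m) (ext E S N m) K ->
  exists Ko t, red N S K Ko t.
Proof.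
  intros HH [Hne [Hlt Hcl]]. pose proof HH as (HE & Hs & HS & HSl & _).
  destruct (classic (exists w, In w K /\ N <= w)) as [[w [Hw Hwn]]|Hn].
  - assert (HK : forall u, In u K -> In u S \/ N <= u).
    { intros u Hu. destruct (Nat.eq_dec u w); [subst; auto|].
      destruct (Hcl w u Hw Hu ltac:(auto)) as [H|(_ & H & _)].
      - apply HE in H; lia.
      - apply inQ in H; destruct H; auto; lia. }
    destruct (classic (exists u, In u K /\ u < N)) as [Ho|Ho].
    + do 2 eexists; apply redM; eauto.
    + do 2 eexists; apply redX. intros u Hu. destruct (lt_dec u N); auto; [|lia].
      exfalso; eauto.
  - do 2 eexists; apply redO. intros u Hu. destruct (lt_dec u N); auto. exfalso; apply Hn; exists u; split; auto; lia.
Qed.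

Lemma red_cliq N E S m K Ko t : SH N E S m -> cliq (N + m) (ext E S N m) K -> red N S K Ko t -> cliq N E Ko.
Proof.
  intros HH [Hne [Hlt Hcl]] Hr. pose proof HH as (HE & Hs & HS & HSl & HSne & _).
  destruct Hr as [K HK|K HK [u [Hu Hun]] _|K HK].
  - repeat split; auto. intros; eapply ext_old; eauto.
  - repeat split.
    + intro Hf. assert (In u (filter (fun v => v <? N) K)) by (apply filter_In; split; auto; apply Nat.ltb_lt; auto).
      rewrite Hf in H; destruct H.
    + intros v Hv. apply filter_In in Hv as [_ Hv]. apply Nat.ltb_lt; auto.
    + intros a b Ha Hb Hab. apply filter_In in Ha as [Ha Ha']. apply filter_In in Hb as [Hb Hb'].
      apply Nat.ltb_lt in Ha'. apply Nat.ltb_lt in Hb'. eapply ext_old; eauto.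
  - repeat split; auto.
Qed.

Lemma red_up N E S m K Ko t : SH N E S m -> cliq (N + m) (ext E S N m) K -> red N S K Ko t ->
  forall a0, In a0 Ko -> exists a, In a K /\ walk (ext E S N m) a a0 t.
Proof.
  intros HH [Hne [Hlt Hcl]] Hr. pose proof HH as (HE & Hs & HS & HSl & HSne & _).
  destruct Hr as [K HK|K HK _ _|K HK]; intros a0 Ha0.
  - exists a0; split; auto; constructor.
  - apply filter_In in Ha0 as [? _]. exists a0; split; auto; constructor.
  - destruct K as [|a K]; [congruence|]. exists a; split; simpl; auto.
    apply walk_edge. assert (N <= a) by (apply HK; simpl; auto).
    assert (a < N + m) by (apply Hlt; simpl; auto).
    assert (a0 < N) by auto.
    apply ext_Q; [apply inQ; right; lia | apply inQ; left; auto | lia].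
Qed.

Lemma red_low N E S m K Ko t : SH N E S m -> cliq (N + m) (ext E S N m) K -> red N S K Ko t ->
  forall a v k, In a K -> v < N -> walk (ext E S N m) a v k ->
  exists a0 k', In a0 Ko /\ k' + t <= k /\ walk E a0 v k'.
Proof.
  intros HH [Hne [Hlt Hcl]] Hr. pose proof HH as (HE & Hs & HS & HSl & HSne & _).
  intros a v k Ha Hv Hw. destruct (proj _ _ _ _ HH _ _ _ Hw Hv) as [P1 P2].
  destruct Hr as [K HK|K HK [u [Hu Hun]] _|K HK].
  - destruct (P1 (HK a Ha)) as [k' [? ?]]. exists a, k'; repeat split; auto; lia.
  - destruct (lt_dec a N).
    + destruct (P1 l) as [k' [? ?]]. exists a, k'; repeat split; auto; [|lia].
      apply filter_In; split; auto; apply Nat.ltb_lt; auto.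
    + destruct (P2 ltac:(lia)) as [s [k' (Hs' & Hk & Hw2)]].
      assert (Hu' : In u S) by (destruct (HK u Hu); auto; lia).
      assert (In u (filter (fun v => v <? N) K)) by (apply filter_In; split; auto; apply Nat.ltb_lt; auto).
      destruct (Nat.eq_dec u s).
      * subst. exists s, k'; repeat split; auto; lia.
      * exists u, (1 + k'); repeat split; auto; [lia|]. econstructor; eauto.
  - destruct (P2 (HK a Ha)) as [s [k' (Hs' & Hk & Hw2)]]. exists s, k'; repeat split; auto.
Qed.

Lemma red_old N S K Ko t a : red N S K Ko t -> In a K -> a < N -> t = 0 /\ In a Ko.
Proof.
  destruct 1 as [K HK|K HK _ _|K HK]; intros Ha Hlt; split; auto.
  - apply filter_In; split; auto; apply Nat.ltb_lt; auto.
  - specialize (HK a Ha); lia.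
  - specialize (HK a Ha); lia.
Qed.

Lemma exact N E S m K K' Ko Ko' t t' b : SH N E S m ->
  cliq (N + m) (ext E S N m) K -> cliq (N + m) (ext E S N m) K' ->
  red N S K Ko t -> red N S K' Ko' t' -> (forall u, In u K -> u < N) ->
  isD E Ko Ko' b -> isD (ext E S N m) K K' (b + t + t').
Proof.
  intros HH HK HK' Hr Hr' Hold [[a0 [b0 [Ha0 [Hb0 Hw]]]] Hmin].
  pose proof HH as (HE & Hs & HS & HSl & HSne & _).
  assert (Hs' := ext_sym E S N m Hs).
  split.
  - destruct (red_up _ _ _ _ _ _ _ HH HK Hr a0 Ha0) as [a [Ha Hwa]].
    destruct (red_up _ _ _ _ _ _ _ HH HK' Hr' b0 Hb0) as [bb [Hb Hwb]].
    exists a, bb; repeat split; auto.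
    replace (b + t + t') with (t + (b + t')) by lia.
    eapply walk_app; [eauto|]. eapply walk_app; [|apply walk_rev; eauto].
    eapply walk_mono; [|eauto]. unfold ext; auto.
  - intros a bb k Ha Hb Hw'.
    destruct (red_old _ _ _ _ _ _ Hr Ha (Hold a Ha)) as [-> Hao].
    apply (walk_rev _ _ _ _ Hs') in Hw'.
    destruct (red_low _ _ _ _ _ _ _ HH HK' Hr' _ _ _ Hb (Hold a Ha) Hw') as [b1 [k' (Hb1 & Hk & Hw1)]].
    specialize (Hmin a b1 k' Hao Hb1 (walk_rev _ _ _ _ Hs Hw1)). lia.
Qed.
Definition disj (A B : list nat) := forall a, In a A -> ~ In a B.
Definition Conn (N : nat) (E : graph_rel) := forall u v, u < N -> v < N -> exists k, walk E u v k.

Lemma disj_sym A B : disj A B -> disj B A.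
Proof. unfold disj; intros H a Ha Hb; eapply H; eauto. Qed.

Lemma isD_conn N E A B : cliq N E A -> cliq N E B -> Conn N E -> exists d, isD E A B d.
Proof.
  intros [HA [HAl _]] [HB [HBl _]] HC. apply isD_exists.
  destruct A as [|a A]; [congruence|]. destruct B as [|b B]; [congruence|].
  destruct (HC a b) as [k Hk]; [apply HAl|apply HBl|]; simpl; auto.
  exists a, b, k; simpl; auto.
Qed.

Lemma red1 N S K Ko : red N S K Ko 1 -> Ko = S /\ forall u, In u K -> N <= u.
Proof. intros H; inversion H; subst; auto. Qed.

Lemma red_t N S K Ko t : red N S K Ko t -> t = 0 \/ t = 1.
Proof. destruct 1; auto. Qed.

Lemma KQ N E S m K : cliq (N + m) (ext E S N m) K -> (forall u, In u K -> In u S \/ N <= u) ->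
  forall u, In u K -> In u (S ++ seq N m).
Proof.
  intros [_ [Hl _]] H u Hu. apply inQ. destruct (H u Hu); auto.
Qed.

Lemma isD_Q N E S m K K' : cliq (N + m) (ext E S N m) K -> cliq (N + m) (ext E S N m) K' ->
  (forall u, In u K -> In u S \/ N <= u) -> (forall u, In u K' -> In u S \/ N <= u) ->
  disj K K' -> isD (ext E S N m) K K' 1.
Proof.
  intros HK HK' H H' Hd. apply isD_one; [apply HK|apply HK'| |auto].
  intros a b Ha Hb Hab; apply ext_Q; auto; [apply (KQ N E S m K)|apply (KQ N E S m K')]; auto.
Qed.

Lemma pairL N E S m K K' Ko Ko' t t' b d : SH N E S m ->
  cliq (N + m) (ext E S N m) K -> cliq (N + m) (ext E S N m) K' ->
  red N S K Ko t -> red N S K' Ko' t' -> ~ (t = 1 /\ t' = 1) -> disj K K' ->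
  isD E Ko Ko' b -> isD (ext E S N m) K K' d -> d = b + t + t'.
Proof.
  intros HH HK HK' Hr Hr' Ht Hd Hb Hdd.
  pose proof HH as (HE & Hs & HS & HSl & HSne & _).
  assert (Hs' := ext_sym E S N m Hs).
  pose proof Hr as Hr0. pose proof Hr' as Hr0'.
  destruct Hr0 as [K HKo|K HKm Hu1 Hu2|K HKx].
  - eapply isD_unique; [eauto|]. eapply exact; eauto.
  - destruct Hr0' as [K' HKo'|K' HKm' Hu1' Hu2'|K' HKx'].
    + apply isD_sym in Hdd; auto. apply isD_sym in Hb; auto.
      assert (d = b + 0 + 0); [|lia].
      eapply isD_unique; [eauto|]. eapply exact; eauto.
    + assert (d = 1) by (eapply isD_unique; [eauto|]; eapply isD_Q; eauto).
      assert (b = 1); [|lia].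
      eapply isD_unique; [eauto|]. apply isD_one.
      * destruct (red_cliq _ _ _ _ _ _ _ HH HK Hr) as [? _]; auto.
      * destruct (red_cliq _ _ _ _ _ _ _ HH HK' Hr') as [? _]; auto.
      * intros a c Ha Hc Hac. apply filter_In in Ha as [Ha Ha']. apply filter_In in Hc as [Hc Hc'].
        apply Nat.ltb_lt in Ha'; apply Nat.ltb_lt in Hc'.
        apply HS; auto; [destruct (HKm a Ha)|destruct (HKm' c Hc)]; auto; lia.
      * intros a Ha Hc. apply filter_In in Ha as [Ha _]. apply filter_In in Hc as [Hc _]. eapply Hd; eauto.
    + assert (d = 1) by (eapply isD_unique; [eauto|]; eapply isD_Q; eauto; intros u Hu; right; auto).
      assert (b = 0); [|lia].
      eapply isD_unique; [eauto|]. destruct Hu1 as [u [Hu Hul]].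
      apply (isD_zero _ _ _ u).
      * apply filter_In; split; auto; apply Nat.ltb_lt; auto.
      * destruct (HKm u Hu); auto; lia.
  - destruct Hr0' as [K' HKo'|K' HKm' Hu1' Hu2'|K' HKx'].
    + apply isD_sym in Hdd; auto. apply isD_sym in Hb; auto.
      assert (d = b + 0 + 1); [|lia].
      eapply isD_unique; [eauto|]. eapply exact; eauto.
    + assert (d = 1) by (eapply isD_unique; [eauto|]; eapply isD_Q; eauto; intros u Hu; right; auto).
      assert (b = 0); [|lia].
      eapply isD_unique; [eauto|]. destruct Hu1' as [u [Hu Hul]].
      apply (isD_zero _ _ _ u).
      * destruct (HKm' u Hu); auto; lia.
      * apply filter_In; split; auto; apply Nat.ltb_lt; auto.
    + exfalso; auto.
Qed.

Lemma twin N E S m Ki Kj Kk Koi Koj Kok tk x y : SH N E S m -> Conn N E ->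
  cliq (N + m) (ext E S N m) Ki -> cliq (N + m) (ext E S N m) Kj -> cliq (N + m) (ext E S N m) Kk ->
  red N S Ki Koi 1 -> red N S Kj Koj 1 -> red N S Kk Kok tk -> disj Ki Kk -> disj Kj Kk ->
  isD (ext E S N m) Ki Kk x -> isD (ext E S N m) Kj Kk y -> x = y.
Proof.
  intros HH HC Hi Hj Hk Ri Rj Rk Dik Djk Hx Hy.
  pose proof HH as (HE & Hs & HS & HSl & HSne & _).
  assert (Hs' := ext_sym E S N m Hs).
  destruct (red1 _ _ _ _ Ri) as [-> Hin]. destruct (red1 _ _ _ _ Rj) as [-> Hjn].
  destruct Rk as [K HKo|K HKm Hu1 Hu2|K HKx].
  - assert (HSc : cliq N E S).
    { repeat split; auto. }
    destruct (isD_conn N E K S) as [b Hb]; auto.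
    { eapply red_cliq; eauto. constructor; auto. }
    apply isD_sym in Hx; auto. apply isD_sym in Hy; auto.
    assert (x = b + 0 + 1) by (eapply isD_unique; [eauto|]; eapply exact; eauto; constructor; auto).
    assert (y = b + 0 + 1) by (eapply isD_unique; [eauto|]; eapply exact; eauto; constructor; auto).
    lia.
  - assert (x = 1) by (eapply isD_unique; [eauto|]; eapply isD_Q; eauto; intros u Hu; right; auto).
    assert (y = 1) by (eapply isD_unique; [eauto|]; eapply isD_Q; eauto; intros u Hu; right; auto).
    lia.
  - assert (x = 1) by (eapply isD_unique; [eauto|]; eapply isD_Q; eauto; intros u Hu; right; auto).
    assert (y = 1) by (eapply isD_unique; [eauto|]; eapply isD_Q; eauto; intros u Hu; right; auto).
    lia.
Qed.

Lemma twin1 N E S m Ki Kj Koi Koj d : SH N E S m ->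
  cliq (N + m) (ext E S N m) Ki -> cliq (N + m) (ext E S N m) Kj ->
  red N S Ki Koi 1 -> red N S Kj Koj 1 -> disj Ki Kj -> isD (ext E S N m) Ki Kj d -> d = 1.
Proof.
  intros HH Hi Hj Ri Rj D Hd.
  destruct (red1 _ _ _ _ Ri) as [_ Hin]. destruct (red1 _ _ _ _ Rj) as [_ Hjn].
  eapply isD_unique; [eauto|]; eapply isD_Q; eauto; intros u Hu; right; auto.
Qed.
Definition J (N : nat) (E : graph_rel) := forall K1 K2 K3 K4 d12 d13 d14 d23 d24 d34,
  cliq N E K1 -> cliq N E K2 -> cliq N E K3 -> cliq N E K4 ->
  isD E K1 K2 d12 -> isD E K1 K3 d13 -> isD E K1 K4 d14 ->
  isD E K2 K3 d23 -> isD E K2 K4 d24 -> isD E K3 K4 d34 ->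
  FP (d12 + d34) (d13 + d24) (d14 + d23).

Lemma stepJ N E S m : SH N E S m -> Conn N E -> J N E -> J (N + m) (ext E S N m).
Proof.
  intros HH HC HJ K1 K2 K3 K4 d12 d13 d14 d23 d24 d34 C1 C2 C3 C4 H12 H13 H14 H23 H24 H34.
  pose proof HH as (HE & Hs & HS & HSl & HSne & _).
  assert (Hs' := ext_sym E S N m Hs).
  pose proof (isD_sym _ _ _ _ Hs' H12) as H21.
  pose proof (isD_sym _ _ _ _ Hs' H13) as H31.
  pose proof (isD_sym _ _ _ _ Hs' H14) as H41.
  pose proof (isD_sym _ _ _ _ Hs' H23) as H32.
  pose proof (isD_sym _ _ _ _ Hs' H24) as H42.
  pose proof (isD_sym _ _ _ _ Hs' H34) as H43.
  assert (HT : TRI d12 d13 d14 d23 d24 d34).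
  { unfold TRI; repeat split.
    - exact (wtri _ _ _ _ _ _ _ _ C2 H12 H23 H13).
    - exact (wtri _ _ _ _ _ _ _ _ C4 H14 H43 H13).
    - exact (wtri _ _ _ _ _ _ _ _ C3 H13 H32 H12).
    - exact (wtri _ _ _ _ _ _ _ _ C4 H14 H42 H12).
    - exact (wtri _ _ _ _ _ _ _ _ C2 H12 H24 H14).
    - exact (wtri _ _ _ _ _ _ _ _ C3 H13 H34 H14).
    - exact (wtri _ _ _ _ _ _ _ _ C1 H21 H13 H23).
    - exact (wtri _ _ _ _ _ _ _ _ C4 H24 H43 H23).
    - exact (wtri _ _ _ _ _ _ _ _ C1 H21 H14 H24).
    - exact (wtri _ _ _ _ _ _ _ _ C3 H23 H34 H24).
    - exact (wtri _ _ _ _ _ _ _ _ C1 H31 H14 H34).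
    - exact (wtri _ _ _ _ _ _ _ _ C2 H32 H24 H34). }
  destruct (classic (exists c, In c K1 /\ In c K2)) as [[c [? ?]]|N12].
  { assert (d12 = 0) by (eapply isD_unique; [eauto| eapply isD_zero; eauto]). apply arithZT; [exact HT|]. left;  assumption. }
  destruct (classic (exists c, In c K1 /\ In c K3)) as [[c [? ?]]|N13].
  { assert (d13 = 0) by (eapply isD_unique; [eauto| eapply isD_zero; eauto]). apply arithZT; [exact HT|]. do 1 right; left;  assumption. }
  destruct (classic (exists c, In c K1 /\ In c K4)) as [[c [? ?]]|N14].
  { assert (d14 = 0) by (eapply isD_unique; [eauto| eapply isD_zero; eauto]). apply arithZT; [exact HT|]. do 2 right; left;  assumption. }
  destruct (classic (exists c, In c K2 /\ In c K3)) as [[c [? ?]]|N23].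
  { assert (d23 = 0) by (eapply isD_unique; [eauto| eapply isD_zero; eauto]). apply arithZT; [exact HT|]. do 3 right; left;  assumption. }
  destruct (classic (exists c, In c K2 /\ In c K4)) as [[c [? ?]]|N24].
  { assert (d24 = 0) by (eapply isD_unique; [eauto| eapply isD_zero; eauto]). apply arithZT; [exact HT|]. do 4 right; left;  assumption. }
  destruct (classic (exists c, In c K3 /\ In c K4)) as [[c [? ?]]|N34].
  { assert (d34 = 0) by (eapply isD_unique; [eauto| eapply isD_zero; eauto]). apply arithZT; [exact HT|]. do 5 right; left;  assumption. }
  assert (D12 : disj K1 K2) by (intros a Ha Hb; apply N12; eauto).
  assert (D13 : disj K1 K3) by (intros a Ha Hb; apply N13; eauto).
  assert (D14 : disj K1 K4) by (intros a Ha Hb; apply N14; eauto).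
  assert (D23 : disj K2 K3) by (intros a Ha Hb; apply N23; eauto).
  assert (D24 : disj K2 K4) by (intros a Ha Hb; apply N24; eauto).
  assert (D34 : disj K3 K4) by (intros a Ha Hb; apply N34; eauto).
  pose proof (disj_sym _ _ D12) as D21. pose proof (disj_sym _ _ D13) as D31.
  pose proof (disj_sym _ _ D14) as D41. pose proof (disj_sym _ _ D23) as D32.
  pose proof (disj_sym _ _ D24) as D42. pose proof (disj_sym _ _ D34) as D43.
  destruct (red_exists _ _ _ _ _ HH C1) as [Ko1 [t1 R1]].
  destruct (red_exists _ _ _ _ _ HH C2) as [Ko2 [t2 R2]].
  destruct (red_exists _ _ _ _ _ HH C3) as [Ko3 [t3 R3]].
  destruct (red_exists _ _ _ _ _ HH C4) as [Ko4 [t4 R4]].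
  destruct (classic (t1 = 1 /\ t2 = 1)) as [[-> ->]|T12].
  {  assert (d12 = 1) by exact (twin1 _ _ _ _ _ _ _ _ _ HH C1 C2 R1 R2 D12 H12).
    assert (d13 = d23) by (exact (twin _ _ _ _ _ _ _ _ _ _ _ _ _ HH HC C1 C2 C3 R1 R2 R3 D13 D23 H13 H23)).
    assert (d14 = d24) by (exact (twin _ _ _ _ _ _ _ _ _ _ _ _ _ HH HC C1 C2 C4 R1 R2 R4 D14 D24 H14 H24)).
    apply arithZT; [exact HT|]. do 6 right; left;  repeat split; lia. }
  destruct (classic (t1 = 1 /\ t3 = 1)) as [[-> ->]|T13].
  {  assert (d13 = 1) by exact (twin1 _ _ _ _ _ _ _ _ _ HH C1 C3 R1 R3 D13 H13).
    assert (d12 = d23) by (exact (twin _ _ _ _ _ _ _ _ _ _ _ _ _ HH HC C1 C3 C2 R1 R3 R2 D12 D32 H12 H32)).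
    assert (d14 = d34) by (exact (twin _ _ _ _ _ _ _ _ _ _ _ _ _ HH HC C1 C3 C4 R1 R3 R4 D14 D34 H14 H34)).
    apply arithZT; [exact HT|]. do 7 right; left;  repeat split; lia. }
  destruct (classic (t1 = 1 /\ t4 = 1)) as [[-> ->]|T14].
  {  assert (d14 = 1) by exact (twin1 _ _ _ _ _ _ _ _ _ HH C1 C4 R1 R4 D14 H14).
    assert (d12 = d24) by (exact (twin _ _ _ _ _ _ _ _ _ _ _ _ _ HH HC C1 C4 C2 R1 R4 R2 D12 D42 H12 H42)).
    assert (d13 = d34) by (exact (twin _ _ _ _ _ _ _ _ _ _ _ _ _ HH HC C1 C4 C3 R1 R4 R3 D13 D43 H13 H43)).
    apply arithZT; [exact HT|]. do 8 right; left;  repeat split; lia. }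
  destruct (classic (t2 = 1 /\ t3 = 1)) as [[-> ->]|T23].
  {  assert (d23 = 1) by exact (twin1 _ _ _ _ _ _ _ _ _ HH C2 C3 R2 R3 D23 H23).
    assert (d12 = d13) by (exact (twin _ _ _ _ _ _ _ _ _ _ _ _ _ HH HC C2 C3 C1 R2 R3 R1 D21 D31 H21 H31)).
    assert (d24 = d34) by (exact (twin _ _ _ _ _ _ _ _ _ _ _ _ _ HH HC C2 C3 C4 R2 R3 R4 D24 D34 H24 H34)).
    apply arithZT; [exact HT|]. do 9 right; left;  repeat split; lia. }
  destruct (classic (t2 = 1 /\ t4 = 1)) as [[-> ->]|T24].
  {  assert (d24 = 1) by exact (twin1 _ _ _ _ _ _ _ _ _ HH C2 C4 R2 R4 D24 H24).
    assert (d12 = d14) by (exact (twin _ _ _ _ _ _ _ _ _ _ _ _ _ HH HC C2 C4 C1 R2 R4 R1 D21 D41 H21 H41)).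
    assert (d23 = d34) by (exact (twin _ _ _ _ _ _ _ _ _ _ _ _ _ HH HC C2 C4 C3 R2 R4 R3 D23 D43 H23 H43)).
    apply arithZT; [exact HT|]. do 10 right; left;  repeat split; lia. }
  destruct (classic (t3 = 1 /\ t4 = 1)) as [[-> ->]|T34].
  {  assert (d34 = 1) by exact (twin1 _ _ _ _ _ _ _ _ _ HH C3 C4 R3 R4 D34 H34).
    assert (d13 = d14) by (exact (twin _ _ _ _ _ _ _ _ _ _ _ _ _ HH HC C3 C4 C1 R3 R4 R1 D31 D41 H31 H41)).
    assert (d23 = d24) by (exact (twin _ _ _ _ _ _ _ _ _ _ _ _ _ HH HC C3 C4 C2 R3 R4 R2 D32 D42 H32 H42)).
    apply arithZT; [exact HT|]. do 11 right;  repeat split; lia. }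
  pose proof (red_cliq _ _ _ _ _ _ _ HH C1 R1) as O1.
  pose proof (red_cliq _ _ _ _ _ _ _ HH C2 R2) as O2.
  pose proof (red_cliq _ _ _ _ _ _ _ HH C3 R3) as O3.
  pose proof (red_cliq _ _ _ _ _ _ _ HH C4 R4) as O4.
  destruct (isD_conn _ _ Ko1 Ko2 O1 O2 HC) as [b12 B12].
  destruct (isD_conn _ _ Ko1 Ko3 O1 O3 HC) as [b13 B13].
  destruct (isD_conn _ _ Ko1 Ko4 O1 O4 HC) as [b14 B14].
  destruct (isD_conn _ _ Ko2 Ko3 O2 O3 HC) as [b23 B23].
  destruct (isD_conn _ _ Ko2 Ko4 O2 O4 HC) as [b24 B24].
  destruct (isD_conn _ _ Ko3 Ko4 O3 O4 HC) as [b34 B34].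
  pose proof (HJ _ _ _ _ _ _ _ _ _ _ O1 O2 O3 O4 B12 B13 B14 B23 B24 B34) as HF.
  rewrite (pairL _ _ _ _ _ _ _ _ _ _ _ _ HH C1 C2 R1 R2 T12 D12 B12 H12).
  rewrite (pairL _ _ _ _ _ _ _ _ _ _ _ _ HH C1 C3 R1 R3 T13 D13 B13 H13).
  rewrite (pairL _ _ _ _ _ _ _ _ _ _ _ _ HH C1 C4 R1 R4 T14 D14 B14 H14).
  rewrite (pairL _ _ _ _ _ _ _ _ _ _ _ _ HH C2 C3 R2 R3 T23 D23 B23 H23).
  rewrite (pairL _ _ _ _ _ _ _ _ _ _ _ _ HH C2 C4 R2 R4 T24 D24 B24 H24).
  rewrite (pairL _ _ _ _ _ _ _ _ _ _ _ _ HH C3 C4 R3 R4 T34 D34 B34 H34).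
  apply arithA; auto.
Qed.
Definition Inv (N : nat) (E : graph_rel) (Ss : list (list nat)) :=
  (forall u v, E u v -> u < N /\ v < N) /\ (forall u v, E u v -> E v u) /\
  (forall sg, In sg Ss -> forall u v, In u sg -> In v sg -> u <> v -> E u v) /\
  (forall sg, In sg Ss -> forall u, In u sg -> u < N) /\ Conn N E /\ J N E.

Lemma base_inv n0 : 2 <= n0 -> Inv n0 (clique_rel (seq 0 n0)) [seq 0 n0].
Proof.
  intros Hn. unfold clique_rel.
  assert (Hle : forall K K' d, cliq n0 (clique_rel (seq 0 n0)) K -> cliq n0 (clique_rel (seq 0 n0)) K' ->
            isD (clique_rel (seq 0 n0)) K K' d -> d <= 1).
  { intros K K' d [HK [HKl _]] [HK' [HKl' _]] [_ Hm].
    destruct K as [|a K]; [congruence|]. destruct K' as [|b K']; [congruence|].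
    assert (a < n0) by (apply HKl; simpl; auto). assert (b < n0) by (apply HKl'; simpl; auto).
    destruct (Nat.eq_dec a b).
    - subst. assert (d <= 0) by (apply (Hm b b); simpl; auto; constructor). lia.
    - apply (Hm a b); simpl; auto. apply walk_edge. unfold clique_rel; rewrite !in_seq; repeat split; lia. }
  split; [|split; [|split; [|split; [|split]]]].
  - intros u v (H1 & H2 & _). apply in_seq in H1; apply in_seq in H2; lia.
  - intros u v (? & ? & ?); repeat split; auto.
  - intros sg [<-|[]] u v Hu Hv Hne; auto.
  - intros sg [<-|[]] u Hu. apply in_seq in Hu; lia.
  - intros u v Hu Hv. destruct (Nat.eq_dec u v).
    + subst; exists 0; constructor.
    + exists 1; apply walk_edge. unfold clique_rel; rewrite !in_seq; repeat split; lia.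
  - intros K1 K2 K3 K4 d12 d13 d14 d23 d24 d34 C1 C2 C3 C4 H12 H13 H14 H23 H24 H34.
    pose proof (Hle _ _ _ C1 C2 H12). pose proof (Hle _ _ _ C1 C3 H13). pose proof (Hle _ _ _ C1 C4 H14).
    pose proof (Hle _ _ _ C2 C3 H23). pose proof (Hle _ _ _ C2 C4 H24). pose proof (Hle _ _ _ C3 C4 H34).
    unfold FP; lia.
Qed.

Lemma step_inv N E Ss sigma S m : Inv N E Ss -> In sigma Ss -> incl S sigma -> 1 <= length S -> 1 <= m ->
  Inv (N + m) (ext E S N m) ((S ++ seq N m) :: Ss).
Proof.
  intros (HE & Hs & Hsg & Hsl & HC & HJ) Hin Hinc Hlen Hm.
  assert (HH : SH N E S m).
  { split; [exact HE|split; [exact Hs|split; [|split; [|split; [|exact Hm]]]]].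
    - intros u v Hu Hv; apply (Hsg sigma); auto.
    - intros u Hu; apply (Hsl sigma); auto.
    - intro; subst; simpl in Hlen; lia. }
  assert (HSl : forall u, In u S -> u < N) by (intros u Hu; apply (Hsl sigma); auto).
  assert (HQ : forall u, In u (S ++ seq N m) -> u < N + m).
  { intros u Hu; apply inQ in Hu as [Hu|Hu]; [specialize (HSl u Hu)|]; lia. }
  assert (Hs' := ext_sym E S N m Hs).
  split; [|split; [|split; [|split; [|split]]]].
  - intros u v [H|(H1 & H2 & _)]; [apply HE in H; lia|split; auto].
  - auto.
  - intros sg [<-|Hsg'] u v Hu Hv Hne; [right; repeat split; auto| left; eapply Hsg; eauto].
  - intros sg [<-|Hsg'] u Hu; [auto| specialize (Hsl sg Hsg' u Hu); lia].
  - destruct S as [|s0 S0] eqn:ES; [simpl in Hlen; lia|]. rewrite <- ES in *.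
    assert (Hs0 : In s0 S) by (subst; simpl; auto).
    assert (Hto : forall u, u < N + m -> exists k, walk (ext E S N m) u s0 k).
    { intros u Hu. destruct (lt_dec u N).
      - destruct (HC u s0) as [k Hk]; auto. exists k; eapply walk_mono; [|eauto]. unfold ext; auto.
      - exists 1; apply walk_edge. apply ext_Q; [apply inQ; right; lia|apply inQ; left; auto|].
        specialize (HSl s0 Hs0); lia. }
    intros u v Hu Hv. destruct (Hto u Hu) as [k1 H1]. destruct (Hto v Hv) as [k2 H2].
    exists (k1 + k2). eapply walk_app; eauto. apply walk_rev; auto.
  - apply stepJ; auto.
Qed.

Lemma grown_inv N E Ss : grown N E Ss -> Inv N E Ss.
Proof.
  induction 1.
  - apply base_inv; auto.
  - apply (step_inv N E Ss sigma S (n - length S)); auto; lia.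
Qed.

Theorem mainTheorem1 (N : nat) (E : graph_rel) (Ss : list (list nat)) :
  grown N E Ss ->
  (* connected *)
  (forall u v, u < N -> v < N -> exists k, walk E u v k) /\
  (* four-point hyperbolicity delta(G) <= 1 *)
  (forall A B C D dAB dCD dAC dBD dAD dBC,
      A < N -> B < N -> C < N -> D < N ->
      is_dist E A B dAB -> is_dist E C D dCD ->
      is_dist E A C dAC -> is_dist E B D dBD ->
      is_dist E A D dAD -> is_dist E B C dBC ->
      dAB + dCD <= dAC + dBD ->
      dAC + dBD <= dAD + dBC ->
      dAD + dBC <= dAC + dBD + 2).
Proof.
  intros Hg. destruct (grown_inv _ _ _ Hg) as (_ & _ & _ & _ & HC & HJ).
  split; auto.
  assert (Hc : forall A, A < N -> cliq N E [A]).
  { intros A HA; repeat split; [congruence| |].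
    - intros u [<-|[]]; auto.
    - intros u v [<-|[]] [<-|[]] Hne; congruence. }
  assert (Hd : forall A B d, is_dist E A B d -> isD E [A] [B] d).
  { intros A B d [Hw Hm]; split.
    - exists A, B; simpl; auto.
    - intros a b k [<-|[]] [<-|[]] Hk; auto. }
  intros A B C D dAB dCD dAC dBD dAD dBC HA HB HC' HD H1 H2 H3 H4 H5 H6 O1 O2.
  pose proof (HJ [A] [B] [C] [D] dAB dAC dAD dBC dBD dCD (Hc A HA) (Hc B HB) (Hc C HC') (Hc D HD)
    (Hd _ _ _ H1) (Hd _ _ _ H3) (Hd _ _ _ H5) (Hd _ _ _ H6) (Hd _ _ _ H4) (Hd _ _ _ H2)) as HF.
  unfold FP in HF. lia.
Qed.
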